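(* Let $R$ be a finite set of positive integers with $r=|R|$, let $L$ be an $R$-flag on vertex set $\{1,\dots,v(L)\}$, and let $s_1,\dots,s_{v(L)}$ be positive integers. Then, as $n\to\infty$, \[\pi_n(L(s_1,\dots,s_{v(L)}))=r-1+O(n^{-\delta}),\qquad \delta=\frac{\max\{s_i:1\le i\le v(L)\}}{\prod_{i=1}^{v(L)}s_i}.\]
   Context: A hypergraph $H=(V,E)$ has finite vertex set $V$ and edge set $E\subseteq 2^V$; $R(H)=\{|F|:F\in E\}$. $H_1\subseteq H_2$ means there is an injective $f\colon V(H_1)\to V(H_2)$ with $f(F)\in E(H_2)$ for all $F\in E(H_1)$. For $G$ on $n$ vertices, $h_n(G)=\sum_{F\in E(G)}1/\binom{n}{|F|}$; $\pi_n(H)=\max\{h_n(G): G\text{ on } n \text{ vertices}, R(G)\subseteq R(H), H\not\subseteq G\}$. An $R$-flag is a hypergraph with exactly one edge of each size in $R$ (and no other edges). For $H$ on vertex set $\{1,\dots,m\}$, the blowup $H(s_1,\dots,s_m)$ has vertex set $V_1\sqcup\dots\sqcup V_m$, $|V_i|=s_i$, and edge set $\bigcup_{F\in E(H)}\prod_{i\in F}V_i$. *)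

(* Defs.v *)
From HB Require Import structures.
From mathcomp Require Import all_boot all_order all_algebra.
From mathcomp Require Import reals exp.
Set Implicit Arguments. Unset Strict Implicit. Unset Printing Implicit Defensive.
Import Order.TTheory GRing.Theory Num.Theory.
Local Open Scope ring_scope.

Definition hcontains (V1 V2 : finType) (E1 : {set {set V1}}) (E2 : {set {set V2}}) : bool :=
  [exists f : {ffun V1 -> V2}, injectiveb f && [forall F in E1, (f @: F) \in E2]].

Definition sizes_sub (V1 V2 : finType) (E1 : {set {set V1}}) (E2 : {set {set V2}}) : bool :=
  [forall F in E1, [exists F' in E2, #|F| == #|F'|]].

Definition hn (R : realType) (n : nat) (E : {set {set 'I_n}}) : R :=
  \sum_(F in E) ('C(n, #|F|)%:R)^-1.

(* The max is taken with default 0; since h_n >= 0 this agrees with the true max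
   whenever the family is nonempty (it contains the edgeless graph as soon as H has an edge). *)
Definition pin (R : realType) (V : finType) (EH : {set {set V}}) (n : nat) : R :=
  \big[Num.max/0]_(E : {set {set 'I_n}} | sizes_sub E EH && ~~ hcontains EH E) hn R E.

Definition is_flag (Rs : seq nat) (m : nat) (L : {set {set 'I_m}}) : bool :=
  [forall F in L, #|F| \in Rs] &&
  all (fun k => #|[set F in L | #|F| == k]| == 1%N) Rs.

Definition bvert (m : nat) (s : 'I_m -> nat) : finType := {i : 'I_m & 'I_(s i)}.

(* Edges of L(s_1,...,s_m): the union over F in L of prod_{i in F} V_i, i.e. the sets B
   containing exactly one vertex of each V_i, i in F, and no other vertices. *)
Definition blowup (m : nat) (s : 'I_m -> nat) (L : {set {set 'I_m}}) : {set {set bvert s}} :=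
  [set B : {set bvert s} | [exists F in L, (tag @: B == F) && (#|B| == #|F|)]].

(* Main.v *)
Require Import Defs.
From HB Require Import structures.
From mathcomp Require Import all_boot all_order all_algebra fingroup perm.
From mathcomp Require Import reals exp.
From mathcomp Require Import ring lra zify.
Import Order.TTheory GRing.Theory Num.Theory.
Local Open Scope ring_scope.
Lemma chebyshev_sum (R : realFieldType) (I : finType) (d : I -> R) (a : nat) :
  (forall i, 0 <= d i) ->
  (\sum_i d i) * (\sum_i d i ^+ a) <= #|I|%:R * \sum_i d i ^+ a.+1.
Proof.
move=> d0.
have H0 : 0 <= \sum_i \sum_j (d i - d j) * (d i ^+ a - d j ^+ a).
  apply: sumr_ge0 => i _; apply: sumr_ge0 => j _.
  have [hij|hij] := lerP (d i) (d j).
    apply: mulr_le0; rewrite subr_le0 //.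
    by apply: lerXn2r; rewrite ?nnegrE.
  apply: mulr_ge0; rewrite subr_ge0 ?(ltW hij) //.
  by apply: lerXn2r; rewrite ?nnegrE // ltW.
have E : \sum_i \sum_j (d i - d j) * (d i ^+ a - d j ^+ a) =
   2%:R * (#|I|%:R * \sum_i d i ^+ a.+1 - (\sum_i d i) * (\sum_i d i ^+ a)).
  have E1 : forall i j, (d i - d j) * (d i ^+ a - d j ^+ a) =
     (d i ^+ a.+1 + d j ^+ a.+1) - (d i * d j ^+ a + d j * d i ^+ a).
    by move=> i j; rewrite !exprS; ring.
  under eq_bigr do under eq_bigr do rewrite E1.
  under eq_bigr do rewrite sumrB !big_split /=.
  rewrite sumrB !big_split /=.
  have A1 : \sum_i \sum_(j : I) d i ^+ a.+1 = #|I|%:R * \sum_i d i ^+ a.+1.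
    rewrite mulr_sumr; apply: eq_bigr => i _; by rewrite sumr_const mulr_natl.
  have A2 : \sum_(i : I) \sum_j d j ^+ a.+1 = #|I|%:R * \sum_i d i ^+ a.+1.
    by rewrite sumr_const mulr_natl.
  have A3 : \sum_i \sum_j d i * d j ^+ a = (\sum_i d i) * \sum_i d i ^+ a.
    rewrite mulr_suml; apply: eq_bigr => i _; by rewrite mulr_sumr.
  have A4 : \sum_i \sum_j d j * d i ^+ a = (\sum_i d i) * \sum_i d i ^+ a.
    rewrite mulr_sumr; apply: eq_bigr => i _; by rewrite mulr_suml.
  rewrite A1 A2 A3 A4; ring.
lra.
Qed.
Lemma power_mean (R : realFieldType) (I : finType) (d : I -> R) (a : nat) :
  (forall i, 0 <= d i) ->
  (\sum_i d i) ^+ a.+1 <= #|I|%:R ^+ a * \sum_i d i ^+ a.+1.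
Proof.
move=> d0; elim: a => [|a IH]; first by rewrite expr0 mul1r.
have S0 : 0 <= \sum_i d i by apply: sumr_ge0.
rewrite exprS.
apply: le_trans (ler_wpM2l S0 IH) _.
set N := #|I|%:R; set Sa := \sum_i d i ^+ a.+1; set Sb := \sum_i d i ^+ a.+2.
have -> : (\sum_i d i) * (N ^+ a * Sa) = N ^+ a * ((\sum_i d i) * Sa) by ring.
have -> : N ^+ a.+1 * Sb = N ^+ a * (N * Sb) by rewrite exprS; ring.
apply: ler_wpM2l; first by apply: exprn_ge0.
exact: chebyshev_sum.
Qed.

Lemma ffact_le_exp (n a : nat) : (n ^_ a <= n ^ a)%N.
Proof.
elim: a => [|a IH]; first by rewrite ffactn0 expn0.
rewrite ffactnSr expnS mulnC; apply: leq_mul => //; exact: leq_subr.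
Qed.

Lemma exp_ffact_bound (n a : nat) : (n ^ a.+1 <= n ^_ a.+1 + a.+1 * a.+1 * n ^ a)%N.
Proof.
elim: a => [|a IH]; first by rewrite ffactn1 expn1 expn0; lia.
have h1 : (n * n ^_ a.+1 <= n ^_ a.+2 + a.+1 * n ^_ a.+1)%N.
  rewrite (ffactnSr n a.+1); set Y := (n ^_ a.+1)%N.
  have : (n <= (n - a.+1) + a.+1)%N by lia.
  move=> h; rewrite mulnC; apply: leq_trans (leq_mul (leqnn Y) h) _.
  by rewrite mulnDr [(Y * a.+1)%N]mulnC.
have h2 := ffact_le_exp n a.+1.
rewrite expnS.
apply: leq_trans (leq_mul (leqnn n) IH) _.
rewrite mulnDr.
apply: leq_trans (leq_add h1 (leqnn _)) _.
rewrite -addnA leq_add2l.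
have -> : (n * (a.+1 * a.+1 * n ^ a) = a.+1 * a.+1 * n ^ a.+1)%N by rewrite expnS; ring.
set X := (n ^ a.+1)%N. set Y := (n ^_ a.+1)%N.
nia.
Qed.
Lemma card_pairs_sum (Y : finType) (n : nat) (P : 'I_n -> Y -> bool) :
  #|[set p : 'I_n * Y | P p.1 p.2]| = (\sum_y #|[set x | P x y]|)%N.
Proof.
rewrite -sum1dep_card -(pair_big_dep xpredT (fun x y => P x y) (fun _ _ => 1%N)) /=.
rewrite (exchange_big_dep xpredT) //=.
by apply: eq_bigr => y _; rewrite sum1dep_card.
Qed.

Lemma sum_cnt_pow (Y : finType) (n a : nat) (P : 'I_n -> Y -> bool) :
  (\sum_(u : {ffun 'I_a -> 'I_n}) #|[set y | [forall i, P (u i) y]]| =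
   \sum_y #|[set x | P x y]| ^ a)%N.
Proof.
rewrite (eq_bigr (fun u : {ffun 'I_a -> 'I_n} => \sum_(y | [forall i, P (u i) y]) 1)%N); last by move=> u _; rewrite sum1dep_card.
rewrite (exchange_big_dep xpredT) //=.
apply: eq_bigr => y _; rewrite sum1dep_card.
have -> : #|[set x | P x y]| = #|[pred x | P x y]| by apply: eq_card => x; rewrite inE.
rewrite -[a in RHS]card_ord -card_ffun_on; apply: eq_card => u.
rewrite inE; apply/forallP/ffun_onP => h i; move: (h i) => //.
Qed.
Lemma step_lemma (R : realFieldType) (Y : finType) (n a : nat) (P : 'I_n -> Y -> bool) :
  (0 < #|Y|)%N ->
  let rho : R := #|[set p : 'I_n * Y | P p.1 p.2]|%:R / (n * #|Y|)%:R in
  2 * (a.+1 ^ 2)%:R < rho ^+ a.+1 * n%:R ->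
  exists S : {set 'I_n}, #|S| = a.+1 /\
    rho ^+ a.+1 * #|Y|%:R / 2 <= #|[set y | [forall x in S, P x y]]|%:R.
Proof.
move=> Ypos rho H.
set N := #|Y|.
have Npos : (0 : R) < N%:R by rewrite ltr0n.
have Acard := card_pairs_sum Y n P.
set A := #|[set p : 'I_n * Y | P p.1 p.2]|.
have AnN : (A <= n * N)%N.
  by rewrite /A; apply: leq_trans (max_card _) _; rewrite card_prod card_ord.
have npos : (0 < n)%N.
  case: n P rho H A Acard AnN => [|n'] // P rho H.
  by move: H; rewrite mulr0 ltNge; move/negP; case; rewrite mulr_ge0 // ler0n.
have rho0 : 0 <= rho by rewrite /rho divr_ge0 // ler0n.
have rho1 : rho <= 1.
  rewrite /rho ler_pdivrMr ?mul1r ?ler_nat // ltr0n muln_gt0 npos //.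
have rhoa1 : rho ^+ a.+1 <= 1 by apply: exprn_ile1.
have an : (a.+1 <= n)%N.
  have : (2 * (a.+1 ^ 2)%:R : R) < n%:R.
    apply: lt_le_trans H _; rewrite -[X in _ <= X]mul1r; apply: ler_wpM2r => //.
  rewrite -natrM ltr_nat => h; apply: leq_trans (ltnW h).
  by rewrite mulnC -mulnA leq_pmulr // expn_gt0.
set X := rho ^+ a.+1 * N%:R / 2.
set cnt := fun u : {ffun 'I_a.+1 -> 'I_n} => #|[set y | [forall i, P (u i) y]]|.
case: (pickP (fun u : {ffun 'I_a.+1 -> 'I_n} => injectiveb u && (X <= (cnt u)%:R))) => [u /andP[/injectiveP uinj Hu] | Hnone].
  exists [set u i | i : 'I_a.+1]; split; first by rewrite card_imset // card_ord.
  apply: le_trans Hu _; rewrite /cnt ler_nat; apply: subset_leq_card; apply/subsetP => y.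
  rewrite !inE => /forallP h; apply/forallP => x; apply/implyP => /imsetP [i _ ->].
  exact: h.
exfalso.
have Hc : forall u : {ffun 'I_a.+1 -> 'I_n}, injectiveb u -> (cnt u)%:R < X.
  by move=> u hu; move: (Hnone u); rewrite hu /= => /negbT; rewrite -ltNge.
have E1 := sum_cnt_pow Y n a.+1 P.
have pm := power_mean R Y (fun y => (#|[set x | P x y]|)%:R : R) a (fun y => ler0n _ _).
rewrite -/N in pm.
have SA : \sum_y (#|[set x | P x y]|)%:R = (A%:R : R) by rewrite /A Acard natr_sum.
rewrite SA in pm.
have Sd : \sum_y (#|[set x | P x y]|)%:R ^+ a.+1 = \sum_u ((cnt u)%:R : R).
  rewrite -natr_sum /cnt E1 natr_sum; apply: eq_bigr => y _; by rewrite natrX.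
rewrite Sd (bigID (fun u : {ffun 'I_a.+1 -> 'I_n} => injectiveb u)) /= in pm.
have Hinj : \sum_(u : {ffun 'I_a.+1 -> 'I_n} | injectiveb u) ((cnt u)%:R : R) <= (n ^_ a.+1)%:R * X.
  apply: (@le_trans _ _ (\sum_(u : {ffun 'I_a.+1 -> 'I_n} | injectiveb u) X)).
    by apply: ler_sum => u hu; apply: ltW; apply: Hc.
  rewrite sumr_const -[_ *+ #|_|]mulr_natl; apply: ler_pM => //.
    by rewrite /X divr_ge0 // mulr_ge0 // exprn_ge0.
  have := card_inj_ffuns 'I_a.+1 'I_n; rewrite !card_ord => <-.
  by rewrite ler_nat; apply: eq_leq; apply: eq_card => u; rewrite inE.
have Hnon : \sum_(u : {ffun 'I_a.+1 -> 'I_n} | ~~ injectiveb u) ((cnt u)%:R : R) <= ((a.+1 * a.+1 * n ^ a)%:R) * N%:R.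
  apply: (@le_trans _ _ (\sum_(u : {ffun 'I_a.+1 -> 'I_n} | ~~ injectiveb u) (N%:R : R))).
    by apply: ler_sum => u _; rewrite ler_nat /cnt max_card.
  rewrite sumr_const -[_ *+ #|_|]mulr_natl; apply: ler_pM => //.
  rewrite ler_nat.
  have cc : (#|[pred u : {ffun 'I_a.+1 -> 'I_n} | ~~ injectiveb u]| + n ^_ a.+1 = n ^ a.+1)%N.
    have := card_inj_ffuns 'I_a.+1 'I_n; rewrite !card_ord => <-.
    have := card_ffun 'I_a.+1 'I_n; rewrite !card_ord => <-.
    rewrite -[X in (_ = X)%N](cardC [pred u : {ffun 'I_a.+1 -> 'I_n} | injectiveb u]) addnC.
    by congr (_ + _)%N; apply: eq_card => u; rewrite !inE.
  have := exp_ffact_bound n a.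
  move: cc; set q := #|_|; set f1 := (n ^_ a.+1)%N; set e1 := (n ^ a.+1)%N.
  set e0 := (a.+1 * a.+1 * n ^ a)%N; lia.
set z := rho ^+ a.+1.
set pa := (n%:R : R) ^+ a.
set NN := (N%:R : R) ^+ a.
have Aeq : (A%:R : R) = rho * n%:R * N%:R.
  by rewrite /rho -mulrA -natrM divfK // pnatr_eq0 -lt0n muln_gt0 npos.
have Heq : (A%:R : R) ^+ a.+1 = z * (n%:R * pa) * (N%:R * NN).
  by rewrite Aeq /z /pa /NN !exprMn !exprS; ring.
have Hnf : ((n ^_ a.+1)%:R : R) <= n%:R * pa.
  by rewrite /pa -natrX -natrM -expnS ler_nat ffact_le_exp.
have X0 : 0 <= X by rewrite /X divr_ge0 // mulr_ge0 // exprn_ge0.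
have Hf : z * (n%:R * pa) * (N%:R * NN) <= NN * ((n%:R * pa) * X + (a.+1 * a.+1)%:R * pa * N%:R).
  rewrite -Heq; apply: le_trans pm _; apply: ler_wpM2l; first by rewrite exprn_ge0.
  apply: lerD.
    apply: le_trans Hinj _; apply: ler_wpM2r => //.
  by apply: le_trans Hnon _; rewrite natrM natrX.
have pa0 : 0 < pa by rewrite exprn_gt0 // ltr0n.
have NN0 : 0 < NN by rewrite exprn_gt0.
have n0 : (0 : R) < n%:R by rewrite ltr0n.
move: H Hf; rewrite /X -/z => H Hf.
have Hx : z * n%:R <= 2 * (a.+1 ^ 2)%:R.
  have h2 : 0 < pa * NN * N%:R by rewrite !mulr_gt0.
  rewrite -(ler_pM2r h2).
  have -> : (a.+1 ^ 2)%:R = ((a.+1 * a.+1)%:R : R) by rewrite expnS expn1.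
  move: Hf; set c := ((a.+1 * a.+1)%:R : R) => Hf.
  nra.
by move: H; rewrite ltNge Hx.
Qed.
Lemma card_cons_pairs (n k : nat) (P : pred (k.+1.-tuple 'I_n)) :
  #|[set p : 'I_n * k.-tuple 'I_n | P [tuple of p.1 :: p.2]]| = #|P|.
Proof.
pose f (p : 'I_n * k.-tuple 'I_n) : k.+1.-tuple 'I_n := [tuple of p.1 :: p.2].
have finj : injective f.
  move=> [x y] [x' y'] /(congr1 val) /= [-> /val_inj ->] //.
rewrite -(card_imset _ finj); apply: eq_card => t.
apply/imsetP/idP => [[p] | Pt].
  by rewrite !inE => Pp ->.
exists (thead t, [tuple of behead t]); first by rewrite inE /= -tuple_eta.
by rewrite /f /= -tuple_eta.
Qed.

Lemma card_one_tuple (n : nat) (P : pred (1.-tuple 'I_n)) :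
  #|[set x : 'I_n | P [tuple x]]| = #|P|.
Proof.
pose f (x : 'I_n) : 1.-tuple 'I_n := [tuple x].
have finj : injective f by move=> x y /(congr1 val) [].
rewrite -(card_imset _ finj); apply: eq_card => t.
apply/imsetP/idP => [[p] | Pt].
  by rewrite !inE => Pp ->.
have te : t = [tuple thead t].
  by apply: val_inj; case: (t) => [[|x [|y s]] //].
by exists (thead t); rewrite // inE -te.
Qed.

Lemma last_le_prod (s : seq nat) : all (fun k => 0 < k)%N s ->
  (last 0 s <= \prod_(j <- s) j)%N.
Proof.
elim: s => [|a s IH] //= /andP [a0 s0].
rewrite big_cons.
case: s IH s0 => [|b s] IH s0; first by rewrite big_nil muln1.
apply: leq_trans (IH s0) _; by rewrite leq_pmull.
Qed.

Lemma prod_pos (s : seq nat) : all (fun k => 0 < k)%N s -> (0 < \prod_(j <- s) j)%N.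
Proof.
elim: s => [|a s IH] /=; first by rewrite big_nil.
by move=> /andP [a0 s0]; rewrite big_cons muln_gt0 a0 IH.
Qed.
Definition inbox {n : nat} (t : seq 'I_n) (V : seq {set 'I_n}) :=
  all2 (fun x (A : {set 'I_n}) => x \in A) t V.

Lemma KST_tuple (R : realFieldType) (ss : seq nat) : ss != [::] ->
  all (fun k => 0 < k)%N ss ->
  exists K : R, 1 <= K /\ forall (k n : nat) (P : pred (k.-tuple 'I_n)),
   size ss = k -> (0 < n)%N ->
   K <= (#|P|%:R / (n ^ k)%:R) ^+ (\prod_(j <- ss) j) * n%:R ^+ (last 0 ss) ->
   exists V : seq {set 'I_n}, all2 (fun (A : {set 'I_n}) j => #|A| == j) V ss /\
     forall t : k.-tuple 'I_n, inbox t V -> P t.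
Proof.
elim: ss => [//|a ss IH] _ /= /andP [a0 s0].
case: ss IH s0 => [|b ss] IH s0.
  exists (a%:R ^+ a); split.
    by rewrite exprn_ege1 // ler1n.
  move=> k n P Hk n0; subst k; rewrite /= big_cons big_nil muln1 expn1 => HK.
  have cP : (a <= #|P|)%N.
    rewrite leqNgt; apply/negP => lt.
    move: HK; rewrite -exprMn mulfVK ?pnatr_eq0 -?lt0n // => HK.
    have : (#|P|%:R : R) ^+ a < a%:R ^+ a.
      by rewrite -!natrX ltr_nat ltn_exp2r // -lt0n.
    by rewrite ltNge HK.
  have := cards_draws [set x : 'I_n | P [tuple x]] a.
  rewrite card_one_tuple => hc.
  have : (0 < 'C(#|P|, a))%N by rewrite bin_gt0.
  rewrite -hc => /card_gt0P [S]; rewrite inE => /andP [sub /eqP cS].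
  exists [:: S]; split; first by rewrite /= cS eqxx.
  move=> t; rewrite /inbox.
  have te : t = [tuple thead t] by apply: val_inj; case: (t) => [[|x [|y s]] //].
  rewrite [in X in X -> _]te /= andbT => xS.
  by move/subsetP: sub => /(_ _ xS); rewrite inE -te.
case: a a0 => [//|a'] _.
have [K' [K'1 HK']] := IH isT s0.
set Pi := \prod_(j <- b :: ss) j.
have Pi0 : (0 < Pi)%N by apply: prod_pos.
have MPi : (last 0 (b :: ss) <= Pi)%N by apply: last_le_prod.
set c : R := 2 * (a'.+1 ^ 2)%:R.
have c1 : 1 <= c.
  rewrite /c; apply: (@le_trans _ _ 2); first by rewrite ler1n.
  rewrite -[X in X <= _]mulr1 ler_pM2l // ler1n expn_gt0 //.
exists (c ^+ Pi * 2 ^+ Pi * K'); split.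
  by rewrite -mulrA; apply: mulr_ege1; rewrite ?exprn_ege1 // mulr_ege1 // exprn_ege1 // ler1n.
move=> k n P Hk n0; subst k; rewrite big_cons /= -/Pi => HK.
set k' := size (b :: ss).
pose Q (x : 'I_n) (y : k'.-tuple 'I_n) := P [tuple of x :: y].
have Ycard : #|{: k'.-tuple 'I_n}| = (n ^ k')%N by rewrite card_tuple card_ord.
have Y0 : (0 < #|{: k'.-tuple 'I_n}|)%N by rewrite Ycard expn_gt0 n0.
have cardQ : #|[set p : 'I_n * k'.-tuple 'I_n | Q p.1 p.2]| = #|P|.
  exact: card_cons_pairs.
set rho : R := #|[set p : 'I_n * k'.-tuple 'I_n | Q p.1 p.2]|%:R / (n * #|{: k'.-tuple 'I_n}|)%:R.
have rhoE : rho = #|P|%:R / (n ^ k'.+1)%:R by rewrite /rho cardQ Ycard expnS.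
have rho0 : 0 <= rho by rewrite rhoE divr_ge0 // ler0n.
rewrite -rhoE in HK.
have n1 : (1 : R) <= n%:R by rewrite ler1n.
have side : 2 * (a'.+1 ^ 2)%:R < rho ^+ a'.+1 * n%:R.
  rewrite ltNge; apply/negP => hle.
  have h1 : (rho ^+ a'.+1 * n%:R) ^+ Pi <= c ^+ Pi.
    apply: lerXn2r; rewrite ?nnegrE //.
      by rewrite mulr_ge0 ?exprn_ge0 ?ler0n.
    exact: le_trans ler01 c1.
  have h2 : rho ^+ (a'.+1 * Pi) * n%:R ^+ last 0 (b :: ss) <= (rho ^+ a'.+1 * n%:R) ^+ Pi.
    rewrite [X in _ <= X]exprMn -exprM; apply: ler_pM; rewrite ?exprn_ge0 ?ler0n //.
    by rewrite -!natrX ler_nat leq_pexp2l.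
  have : c ^+ Pi * 2 ^+ Pi * K' <= c ^+ Pi by apply: le_trans HK (le_trans h2 h1).
  apply/negP; rewrite -ltNge -mulrA -[X in X < _]mulr1 ltr_pM2l; last by rewrite exprn_gt0 // (lt_le_trans ltr01 c1).
  have h2P : (2 : R) <= 2 ^+ Pi.
    by rewrite -natrX ler_nat; case: (Pi) Pi0 => // p _; rewrite expnS leq_pmulr // expn_gt0.
  have h3 : (2 : R) ^+ Pi <= 2 ^+ Pi * K'.
    by rewrite ler_peMr // exprn_ge0.
  apply: (lt_le_trans _ (le_trans h2P h3)); by rewrite ltr1n.
have [S [cS HS]] := step_lemma R (k'.-tuple 'I_n) n a' Q Y0 side.
rewrite -/rho Ycard in HS.
pose P2 : pred (k'.-tuple 'I_n) := fun y => [forall x in S, Q x y].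
have cP2 : #|[set y | [forall x in S, Q x y]]| = #|P2| by apply: eq_card => y; rewrite inE.
rewrite cP2 in HS.
have nk0 : (0 : R) < (n ^ k')%:R by rewrite ltr0n expn_gt0 n0.
set rr : R := #|P2|%:R / (n ^ k')%:R.
have rr1 : rho ^+ a'.+1 / 2 <= rr.
  by rewrite /rr ler_pdivlMr // mulrAC.
have rr2 : rho ^+ (a'.+1 * Pi) / 2 ^+ Pi <= rr ^+ Pi.
  rewrite exprM -expr_div_n; apply: lerXn2r; rewrite ?nnegrE ?divr_ge0 ?exprn_ge0 //.
have [V' [HV'1 HV'2]] : exists V : seq {set 'I_n}, all2 (fun (A : {set 'I_n}) j => #|A| == j) V (b :: ss) /\
     forall t : k'.-tuple 'I_n, inbox t V -> P2 t.
  apply: (HK' k' n P2 erefl n0).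
  have cPi1 : 1 <= c ^+ Pi by apply: exprn_ege1.
  have twoP : (0 : R) < 2 ^+ Pi by apply: exprn_gt0.
  apply: (@le_trans _ _ (c ^+ Pi * K')).
    by rewrite ler_peMl // (le_trans ler01 K'1).
  have : c ^+ Pi * K' <= rho ^+ (a'.+1 * Pi) * n%:R ^+ last 0 (b :: ss) / 2 ^+ Pi.
    by rewrite ler_pdivlMr // mulrAC.
  move/le_trans; apply; rewrite mulrAC ler_pM2r; first exact: rr2.
  by rewrite exprn_gt0 // ltr0n.
exists (S :: V'); split; first by rewrite /= cS eqxx HV'1.
move=> t; case/tupleP: t => x y; rewrite /inbox /= => /andP [xS hy].
by move: (HV'2 y hy) => /forallP /(_ x); rewrite xS.
Qed.
Lemma all2_nth (T1 T2 : Type) (r : T1 -> T2 -> bool) (x1 : T1) (x2 : T2) s t :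
  all2 r s t -> size s = size t /\ forall i, (i < size s)%N -> r (nth x1 s i) (nth x2 t i).
Proof.
elim: s t => [|a s IH] [|b t] //= /andP [rab /IH [e h]]; split; first by rewrite e.
by case=> [|i] //= /h.
Qed.

Lemma nth_all2 (T1 T2 : Type) (r : T1 -> T2 -> bool) (x1 : T1) (x2 : T2) s t :
  size s = size t -> (forall i, (i < size s)%N -> r (nth x1 s i) (nth x2 t i)) -> all2 r s t.
Proof.
elim: s t => [|a s IH] [|b t] //= [e] h; rewrite (h 0%N) //=.
by apply: IH => // i hi; apply: (h i.+1).
Qed.

Lemma KST_ffun (R : realFieldType) (m : nat) (s : 'I_m.+1 -> nat) : (forall i, 0 < s i)%N ->
  exists K : R, 1 <= K /\ forall (n : nat) (G : pred {ffun 'I_m.+1 -> 'I_n}), (0 < n)%N ->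
   K <= (#|G|%:R / (n ^ m.+1)%:R) ^+ (\prod_(i < m.+1) s i) * n%:R ^+ (\max_(i < m.+1) s i) ->
   exists V : 'I_m.+1 -> {set 'I_n}, (forall i, #|V i| = s i) /\
     forall phi : {ffun 'I_m.+1 -> 'I_n}, (forall i, phi i \in V i) -> G phi.
Proof.
move=> spos.
set istar := [arg max_(i > ord0) s i].
have Mdef : (\max_(i < m.+1) s i = s istar)%N by rewrite (bigop.bigmax_eq_arg ord0).
pose pi := tperm istar ord_max.
have piK : forall i, pi (pi i) = i by move=> i; rewrite tpermK.
set ss := [seq s (pi j) | j <- enum 'I_m.+1].
have sz : size ss = m.+1 by rewrite size_map size_enum_ord.
have ss0 : ss != [::] by rewrite -size_eq0 sz.
have sspos : all (fun k => 0 < k)%N ss by apply/allP => x /mapP [j _ ->].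
have prodE : (\prod_(j <- ss) j = \prod_(i < m.+1) s i)%N.
  rewrite big_map big_enum /= (reindex_inj (@perm_inj _ pi)) /=.
  by apply: eq_bigr => i _; rewrite piK.
have nthss : forall i : 'I_m.+1, nth 0%N ss i = s (pi i).
  by move=> i; rewrite (nth_map ord0) ?size_enum_ord // nth_ord_enum.
have lastE : last 0%N ss = s istar.
  by rewrite -nth_last sz /= (nthss ord_max) /pi tpermR.
have [K [K1 HK]] := KST_tuple R ss ss0 sspos.
exists K; split => // n G n0.
rewrite -prodE Mdef -lastE => HG.
pose phi (t : m.+1.-tuple 'I_n) : {ffun 'I_m.+1 -> 'I_n} := [ffun i => tnth t (pi i)].
pose psi (f : {ffun 'I_m.+1 -> 'I_n}) : m.+1.-tuple 'I_n := [tuple f (pi j) | j < m.+1].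
have phipsi : forall f, phi (psi f) = f.
  by move=> f; apply/ffunP => i; rewrite ffunE tnth_mktuple piK.
have psiphi : forall t, psi (phi t) = t.
  by move=> t; apply: eq_from_tnth => j; rewrite tnth_mktuple ffunE piK.
pose P : pred (m.+1.-tuple 'I_n) := fun t => G (phi t).
have cP : #|P| = #|G|.
  have pinj : injective phi by move=> t1 t2 /(congr1 psi); rewrite !psiphi.
  have -> : #|P| = #|[set t | P t]| by apply: eq_card => t; rewrite inE.
  rewrite -(card_imset [set t | P t] pinj); apply: eq_card => f.
  apply/imsetP/idP => [[t] | Gf].
    by rewrite inE => Pt ->.
  by exists (psi f); rewrite ?inE /P phipsi.
rewrite -cP in HG.
have [V [HV1 HV2]] := HK m.+1 n P sz n0 HG.
have [szV HVn] := all2_nth _ _ _ set0 0%N _ _ HV1.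
exists (fun i => nth set0 V (pi i)); split.
  move=> i; have := HVn (pi i); rewrite szV sz ltn_ord => /(_ isT) /eqP ->.
  by rewrite nthss piK.
move=> f Hf.
have : P (psi f).
  apply: HV2; rewrite /inbox; apply: (nth_all2 _ _ _ (Ordinal n0) set0); first by rewrite size_tuple szV sz.
  move=> i; rewrite size_tuple => im.
  have -> : nth (Ordinal n0) (psi f) i = f (pi (Ordinal im)).
    by rewrite -(tnth_nth (Ordinal n0) (psi f) (Ordinal im)) tnth_mktuple.
  by have := Hf (pi (Ordinal im)); rewrite piK.
by rewrite /P phipsi.
Qed.
Section PermExist.
Variable T : finType.

Definition fAB (A B : {set T}) (x : T) := nth x (enum B) (index x (enum A)).

Lemma fAB_mem (A B : {set T}) x : #|A| = #|B| -> x \in A -> fAB A B x \in B.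
Proof.
move=> cAB xA; rewrite /fAB -mem_enum; apply: mem_nth.
by rewrite -cardE -cAB cardE index_mem mem_enum.
Qed.

Lemma fAB_inj (A B : {set T}) x y : #|A| = #|B| -> x \in A -> y \in A ->
  fAB A B x = fAB A B y -> x = y.
Proof.
move=> cAB xA yA; rewrite /fAB.
have ix : (index x (enum A) < size (enum B))%N by rewrite -cardE -cAB cardE index_mem mem_enum.
have iy : (index y (enum A) < size (enum B))%N by rewrite -cardE -cAB cardE index_mem mem_enum.
rewrite (set_nth_default x y iy) => /eqP; rewrite nth_uniq ?enum_uniq // => /eqP h.
by rewrite -(nth_index x (s := enum A) (x := x)) ?mem_enum // h nth_index ?mem_enum.
Qed.

Lemma perm_exist (e e' : {set T}) : #|e| = #|e'| -> exists s : {perm T}, [set s x | x in e] = e'.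
Proof.
move=> ce.
have cc : #|~: e| = #|~: e'|.
  by apply/eqP; rewrite -(eqn_add2l #|e|) cardsC ce cardsC.
pose g x := if x \in e then fAB e e' x else fAB (~: e) (~: e') x.
have ginj : injective g.
  move=> x y; rewrite /g.
  case: (boolP (x \in e)) => xe; case: (boolP (y \in e)) => ye.
  - exact: fAB_inj ce xe ye.
  - move=> h; have := fAB_mem _ _ _ ce xe; rewrite h => hin.
    by have := fAB_mem _ _ y cc; rewrite inE ye => /(_ isT); rewrite inE hin.
  - move=> h; have := fAB_mem _ _ _ ce ye; rewrite -h => hin.
    by have := fAB_mem _ _ x cc; rewrite inE xe => /(_ isT); rewrite inE hin.
  - by apply: (fAB_inj _ _ _ _ cc); rewrite inE.
exists (perm ginj).
apply/eqP; rewrite eqEcard card_imset ?ce ?leqnn ?andbT; last exact: perm_inj.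
apply/subsetP => y /imsetP [x xe ->]; rewrite permE /g xe.
exact: fAB_mem _ _ _ ce xe.
Qed.
End PermExist.
Section PartA.
Set Implicit Arguments. Unset Strict Implicit.

Definition injset (m n : nat) := [set phi : {ffun 'I_m -> 'I_n} | injectiveb phi].

Definition cfib (m n : nat) (F : {set 'I_m}) (e : {set 'I_n}) :=
  #|[set phi in injset m n | [set phi i | i in F] == e]|.

Lemma cfib_le (m n : nat) (F : {set 'I_m}) (e e' : {set 'I_n}) :
  #|e| = #|e'| -> (cfib F e <= cfib F e')%N.
Proof.
move=> ce; have [sg hs] := @perm_exist _ e e' ce.
pose h (phi : {ffun 'I_m -> 'I_n}) := [ffun i => sg (phi i)].
have hinj : injective h.
  move=> p q /ffunP H; apply/ffunP => i; have := H i; rewrite !ffunE; exact: perm_inj.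
rewrite /cfib -(card_imset _ hinj); apply: subset_leq_card; apply/subsetP => q /imsetP [p].
rewrite !inE => /andP [/injectiveP pinj /eqP pe] ->; apply/andP; split.
  by apply/injectiveP => i j; rewrite !ffunE => /perm_inj; apply: pinj.
rewrite -hs -pe -imset_comp; apply/eqP; apply: eq_imset => i; by rewrite /= ffunE.
Qed.

Lemma avg_identity (m n : nat) (F : {set 'I_m}) (E : {set {set 'I_n}}) :
  (#|[set phi in injset m n | [set phi i | i in F] \in E]| * 'C(n, #|F|) =
   #|[set e in E | #|e| == #|F|]| * #|injset m n|)%N.
Proof.
set k := #|F|.
set T := injset m n.
set Kset := [set e : {set 'I_n} | #|e| == k].
have cK : #|Kset| = 'C(n, k) by rewrite card_draws card_ord.
have cardim : forall phi, phi \in T -> #|[set phi i | i in F]| = k.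
  by move=> phi; rewrite inE => /injectiveP pinj; rewrite card_imset.
set Ek := [set e in E | #|e| == k].
have H1 : #|[set phi in T | [set phi i | i in F] \in E]| = (\sum_(e in Ek) cfib F e)%N.
  rewrite -sum1dep_card (partition_big (fun phi : {ffun 'I_m -> 'I_n} => [set phi i | i in F]) (fun e => e \in Ek)) /=.
    apply: eq_bigr => e eEk; rewrite sum1dep_card /cfib; apply: eq_card => phi.
    rewrite !inE; case: eqP => [-> | _]; last by rewrite !andbF.
    by move: eEk; rewrite /Ek inE => /andP [eE _]; rewrite eE !andbT.
  by move=> phi /andP [pT pE]; rewrite /Ek inE pE cardim ?eqxx.
have H2 : #|T| = (\sum_(e in Kset) cfib F e)%N.
  rewrite -[X in X = _]cardsE -sum1dep_card (partition_big (fun phi : {ffun 'I_m -> 'I_n} => [set phi i | i in F]) (fun e => e \in Kset)) /=.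
    apply: eq_bigr => e _; rewrite sum1dep_card /cfib; apply: eq_card => phi.
    by rewrite !inE.
  by move=> phi pT; rewrite inE cardim.
have H3 : forall e e', e \in Kset -> e' \in Kset -> cfib F e = cfib F e'.
  move=> e e'; rewrite !inE => /eqP c1 /eqP c2; apply/eqP; rewrite eqn_leq.
  by rewrite !cfib_le // c1 c2.
rewrite H1 -cK H2 big_distrl /=.
have EK : forall e, e \in Ek -> e \in Kset by move=> e; rewrite !inE => /andP [].
transitivity (\sum_(e in Ek) \sum_(e' in Kset) cfib F e')%N; last by rewrite sum_nat_const.
apply: eq_bigr => e eE; rewrite mulnC -sum_nat_const.
apply: eq_bigr => e' e'K.
by apply: H3 => //; apply: EK.
Qed.
End PartA.
Section PartB.
Set Implicit Arguments. Unset Strict Implicit.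

Lemma flag_in (Rs : seq nat) (m : nat) (L : {set {set 'I_m}}) F :
  is_flag Rs L -> F \in L -> #|F| \in Rs.
Proof. by case/andP => /forallP H _ FL; have := H F; rewrite FL. Qed.

Lemma flag_one (Rs : seq nat) (m : nat) (L : {set {set 'I_m}}) k :
  is_flag Rs L -> k \in Rs -> #|[set F in L | #|F| == k]| = 1%N.
Proof. by case/andP => _ /allP H kR; apply/eqP; apply: H. Qed.

Lemma flag_card (Rs : seq nat) (m : nat) (L : {set {set 'I_m}}) :
  is_flag Rs L -> uniq Rs -> #|L| = size Rs.
Proof.
move=> fl uR.
rewrite -sum1_card.
transitivity (\sum_(F in L) \sum_(k <- Rs) (#|F| == k : nat))%N.
  apply: eq_bigr => F FL.
  rewrite (eq_bigr (fun k => if #|F| == k then 1 else 0)%N) // -big_mkcond sum1_count.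
  have := count_uniq_mem #|F| uR; rewrite (flag_in fl FL) /= => <-.
  by apply: eq_count => k; rewrite /= eq_sym.
rewrite exchange_big /= -sum1_size big_seq_cond [RHS]big_seq_cond.
apply: eq_bigr => k /andP [kR _].
rewrite -big_mkcondr /= sum1dep_card -(flag_one fl kR); apply: eq_card => F.
by rewrite !inE eq_sym.
Qed.
End PartB.
Section PartC.
Set Implicit Arguments. Unset Strict Implicit.
Variable R : realType.

Lemma sizes_sub_in (Rs : seq nat) (m : nat) (L : {set {set 'I_m}}) (s : 'I_m -> nat)
   (n : nat) (E : {set {set 'I_n}}) e :
  is_flag Rs L -> sizes_sub E (blowup s L) -> e \in E -> #|e| \in Rs.
Proof.
move=> fl /forallP /(_ e) H eE; move: H; rewrite eE /= => /existsP [B /andP [BL /eqP ->]].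
move: BL; rewrite inE => /existsP [F /andP [FL /andP [_ /eqP ->]]].
exact: flag_in fl FL.
Qed.

Lemma hn_decomp (Rs : seq nat) (m : nat) (L : {set {set 'I_m}}) (s : 'I_m -> nat)
   (n : nat) (E : {set {set 'I_n}}) :
  is_flag Rs L -> sizes_sub E (blowup s L) ->
  hn R E = \sum_(F in L) #|[set e in E | #|e| == #|F|]|%:R / ('C(n, #|F|))%:R.
Proof.
move=> fl ss; rewrite /hn.
transitivity (\sum_(e in E) \sum_(F in L | #|e| == #|F|) ('C(n, #|F|)%:R : R)^-1).
  apply: eq_bigr => e eE.
  rewrite (eq_bigr (fun _ => ('C(n, #|e|)%:R : R)^-1)); last by move=> F /andP [_ /eqP ->].
  rewrite sumr_const.
  have -> : #|[pred F in L | #|e| == #|F|]| = 1%N.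
    rewrite -(flag_one fl (sizes_sub_in fl ss eE)); apply: eq_card => F.
    by rewrite !inE eq_sym.
  by rewrite mulr1n.
rewrite (exchange_big_dep (fun F => F \in L)) /=; last by move=> e F _ /andP [].
apply: eq_bigr => F FL.
rewrite sumr_const -[_ *+ #|_|]mulr_natl; congr (_%:R * _).
by apply: eq_card => e; rewrite !inE /= FL.
Qed.
End PartC.
Section PartD.
Set Implicit Arguments. Unset Strict Implicit.
Variable R : realType.

Definition goodset (m n : nat) (L : {set {set 'I_m}}) (E : {set {set 'I_n}}) :=
  [set phi in injset m n | [forall F in L, [set phi i | i in F] \in E]].

Lemma good_bound (Rs : seq nat) (m : nat) (L : {set {set 'I_m}}) (s : 'I_m -> nat)
   (n : nat) (E : {set {set 'I_n}}) :
  is_flag Rs L -> uniq Rs -> Rs != [::] -> sizes_sub E (blowup s L) -> (m <= n)%N ->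
  hn R E * #|injset m n|%:R <= ((size Rs)%:R - 1) * #|injset m n|%:R + #|goodset L E|%:R.
Proof.
move=> fl uR Rn0 ss mn.
set T := injset m n.
set cnt := fun F : {set 'I_m} => #|[set phi in T | [set phi i | i in F] \in E]|.
have step1 : forall F, F \in L ->
    #|[set e in E | #|e| == #|F|]|%:R / ('C(n, #|F|))%:R * #|T|%:R = (cnt F)%:R :> R.
  move=> F FL.
  have Cpos : (0 < 'C(n, #|F|))%N.
    by rewrite bin_gt0; apply: leq_trans (max_card _) _; rewrite card_ord.
  have := avg_identity F E; rewrite -/T -/(cnt F) => h.
  rewrite mulrAC -natrM -h natrM mulfK //; by rewrite pnatr_eq0 -lt0n.
rewrite (hn_decomp R fl ss) mulr_suml.
rewrite (eq_bigr (fun F => (cnt F)%:R)); last by move=> F FL; apply: step1.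
rewrite -natr_sum.
have r1 : (0 < size Rs)%N by rewrite lt0n size_eq0.
have -> : ((size Rs)%:R - 1 : R) = (size Rs).-1%:R by rewrite -[in LHS](prednK r1) -natr1 addrK.
rewrite -natrM -natrD ler_nat.
have ex : (\sum_(F in L) cnt F = \sum_(phi in T) #|[set F in L | [set phi i | i in F] \in E]|)%N.
  rewrite /cnt.
  under eq_bigr do rewrite -sum1dep_card.
  under [in RHS]eq_bigr do rewrite -sum1dep_card.
  rewrite (exchange_big_dep (fun phi => phi \in T)) /=; last by move=> F phi _ /andP [].
  apply: eq_bigr => phi pT; apply: eq_bigl => F; by rewrite pT.
rewrite ex.
have per : forall phi, phi \in T ->
   (#|[set F in L | [set phi i | i in F] \in E]| <= (size Rs).-1 + (phi \in goodset L E))%N.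
  move=> phi pT; rewrite /goodset inE pT /=.
  case: (boolP [forall F in L, [set phi i | i in F] \in E]) => [_ | /forallPn [F0]].
    have L0 : (0 < #|L|)%N by rewrite (flag_card fl uR).
    rewrite -(flag_card fl uR) addn1 prednK //; apply: subset_leq_card.
    by apply/subsetP => F; rewrite inE => /andP [].
  rewrite negb_imply => /andP [F0L F0E].
  rewrite addn0 -(flag_card fl uR) (cardsD1 F0 L) F0L /= add0n.
  apply: subset_leq_card; apply/subsetP => F; rewrite !inE => /andP [FL FE].
  by rewrite FL andbT; apply/eqP => eF; move: FE; rewrite eF (negbTE F0E).
apply: leq_trans; first by apply: leq_sum; exact: per.
rewrite big_split /= sum_nat_const mulnC leq_add2l.
rewrite -sum1_card big_mkcond /= [X in (_ <= X)%N]big_mkcond /=.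
by apply: leq_sum => phi _; case: (phi \in T); case: (phi \in goodset L E).
Qed.

End PartD.
Section PartE.
Set Implicit Arguments. Unset Strict Implicit.

Lemma box_hcontains (m n : nat) (L : {set {set 'I_m}}) (s : 'I_m -> nat) (E : {set {set 'I_n}})
  (spos : forall i, (0 < s i)%N) (V : 'I_m -> {set 'I_n}) (HV : forall i, #|V i| = s i) :
  (forall phi : {ffun 'I_m -> 'I_n}, (forall i, phi i \in V i) -> phi \in goodset L E) ->
  hcontains (blowup s L) E.
Proof.
move=> Hbox.
pose f0 (b : bvert s) : 'I_n := enum_val (cast_ord (esym (HV (tag b))) (tagged b)).
have f0V : forall b, f0 b \in V (tag b) by move=> b; apply: enum_valP.
pose dflt (i : 'I_m) : bvert s := Tagged (fun j => 'I_(s j)) (Ordinal (spos i)).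
have goodinj : forall phi : {ffun 'I_m -> 'I_n}, (forall i, phi i \in V i) -> injective phi.
  move=> phi /Hbox; rewrite inE => /andP []; rewrite inE => /injectiveP //.
have f0inj : injective f0.
  move=> b1 b2 heq.
  case: (tag b1 =P tag b2) => [e12 | ne12].
    move: b1 b2 heq e12 => [i1 j1] [i2 j2] /= heq e12.
    subst i2; move: heq; rewrite /f0 /= => /enum_val_inj /cast_ord_inj -> //.
  pose phi := [ffun i => if i == tag b1 then f0 b1 else if i == tag b2 then f0 b2 else f0 (dflt i)].
  have phiV : forall i, phi i \in V i.
    move=> i; rewrite ffunE; case: eqP => [-> | _]; first exact: f0V.
    case: eqP => [-> | _]; first exact: f0V.
    exact: f0V.
  exfalso; apply: ne12; apply: (goodinj phi phiV).
  by rewrite !ffunE eqxx heq eqxx; case: ifP.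
apply/existsP; exists [ffun b => f0 b]; apply/andP; split.
  by apply/injectiveP => b1 b2; rewrite !ffunE; apply: f0inj.
apply/forallP => B; apply/implyP; rewrite inE => /existsP [F /andP [FL /andP [/eqP tB /eqP cB]]].
have tinj : {in B &, injective tag}.
  by apply/imset_injP; rewrite tB cB.
pose phi := [ffun i => if [pick b in B | tag b == i] is Some b then f0 b else f0 (dflt i)].
have phiV : forall i, phi i \in V i.
  move=> i; rewrite ffunE; case: pickP => [b /andP [_ /eqP <-] | _]; exact: f0V.
have := Hbox phi phiV; rewrite inE => /andP [_ /forallP /(_ F)]; rewrite FL /=.
suff -> : [set phi i | i in F] = [set [ffun b => f0 b] x | x in B] by [].
apply/setP => x; apply/imsetP/imsetP => [[i iF ->] | [b bB ->]].
  move: iF; rewrite -tB => /imsetP [b0 b0B ei].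
  rewrite ffunE; case: pickP => [b /andP [bB _] | /(_ b0)]; last by rewrite b0B ei eqxx.
  by exists b; rewrite // ffunE.
exists (tag b); first by rewrite -tB; apply: imset_f.
rewrite !ffunE; case: pickP => [b' /andP [b'B /eqP eb] | /(_ b)]; last by rewrite bB eqxx.
by rewrite (tinj _ _ b'B bB eb).
Qed.
End PartE.
Section PartF.
Set Implicit Arguments. Unset Strict Implicit.
Variable R : realType.

Lemma sum_seq_pick (s : seq nat) x (F : nat -> R) : uniq s -> x \in s ->
  \sum_(k <- s) (if x == k then F k else 0) = F x.
Proof.
elim: s => [//|a s IH] /= /andP [aS us]; rewrite in_cons big_cons.
case: eqP => [-> _ | ne /= xs]; last by rewrite add0r IH.
rewrite big1_seq ?addr0 // => k /andP [_ ks]; case: eqP => // e.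
by move: aS; rewrite e ks.
Qed.

Lemma blow_edge (Rs : seq nat) (m : nat) (L : {set {set 'I_m}}) (s : 'I_m -> nat)
  (spos : forall i, (0 < s i)%N) k :
  is_flag Rs L -> k \in Rs -> exists2 B, B \in blowup s L & #|B| = k.
Proof.
move=> fl kR.
have : (0 < #|[set F in L | #|F| == k]|)%N by rewrite (flag_one fl kR).
case/card_gt0P => F; rewrite inE => /andP [FL /eqP Fk].
pose dflt (i : 'I_m) : bvert s := Tagged (fun j => 'I_(s j)) (Ordinal (spos i)).
have dinj : injective dflt by move=> i j /(congr1 tag).
have tB : [set tag x | x in [set dflt i | i in F]] = F.
  rewrite -imset_comp; apply/setP => i; apply/imsetP/idP => [[j jF ->] // | iF].
  by exists i.
exists [set dflt i | i in F]; last by rewrite card_imset.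
by rewrite inE; apply/existsP; exists F; rewrite FL tB card_imset // !eqxx.
Qed.
End PartF.
Section PartG.
Set Implicit Arguments. Unset Strict Implicit.
Variable R : realType.

Lemma lower_bound (Rs : seq nat) (m : nat) (L : {set {set 'I_m}}) (s : 'I_m -> nat) (n : nat) :
  Rs != [::] -> uniq Rs -> is_flag Rs L -> (forall i, (0 < s i)%N) -> (m <= n)%N ->
  (size Rs)%:R - 1 <= pin R (blowup s L) n.
Proof.
move=> Rn0 uR fl spos mn.
set k0 := head 0%N Rs.
have k0R : k0 \in Rs by rewrite /k0; case: (Rs) Rn0 => // a l _; rewrite mem_head.
have kle : forall k, k \in Rs -> (k <= n)%N.
  move=> k kR; have : (0 < #|[set F in L | #|F| == k]|)%N by rewrite (flag_one fl kR).
  case/card_gt0P => F; rewrite inE => /andP [_ /eqP <-].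
  by apply: leq_trans (max_card _) _; rewrite card_ord.
pose E0 := [set e : {set 'I_n} | (#|e| \in Rs) && (#|e| != k0)].
have hE0 : hn R E0 = (size Rs)%:R - 1.
  rewrite /hn.
  transitivity (\sum_(e in E0) \sum_(k <- Rs) (if #|e| == k then ('C(n, k)%:R : R)^-1 else 0)).
    apply: eq_bigr => e; rewrite inE => /andP [eR _].
    by rewrite (sum_seq_pick (fun k => ('C(n, k)%:R : R)^-1) uR eR).
  rewrite exchange_big /=.
  transitivity (\sum_(k <- Rs) (if k == k0 then 0 else 1 : R)).
    apply: eq_big_seq => k kR.
    rewrite -big_mkcondr /=.
    rewrite (eq_bigr (fun _ => ('C(n, k)%:R : R)^-1)); last by move=> e /andP [_ /eqP].
    rewrite sumr_const.
    have Cn0 : ('C(n, k)%:R : R) != 0 by rewrite pnatr_eq0 -lt0n bin_gt0 kle.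
    case: eqP => [-> | nk].
      rewrite (_ : #|_| = 0%N) ?mulr0n //; apply: eq_card0 => e; rewrite !inE.
      by rewrite unfold_in /= inE; case: (#|e| =P k0) => [-> |]; rewrite ?eqxx ?andbF.
    rewrite (_ : #|_| = 'C(n, k)); first by rewrite -[_ *+ 'C(n, k)]mulr_natl mulfV.
    rewrite -[n in 'C(n, _)]card_ord -card_draws; apply: eq_card => e; rewrite !inE.
    rewrite unfold_in /= inE; case: (#|e| =P k) => [-> |]; rewrite ?andbF ?andbT // kR; by case: eqP.
  have h1 := sum_seq_pick (fun _ => 1 : R) uR k0R.
  rewrite (eq_bigr (fun k => 1 - (if k0 == k then 1 else 0))); last first.
    by move=> k _; rewrite eq_sym; case: eqP; rewrite ?subrr ?subr0.
  by rewrite sumrB h1 -sum1_size natr_sum.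
rewrite -hE0 /pin.
apply: le_bigmax_cond.
apply/andP; split.
  apply/forallP => e; apply/implyP; rewrite inE => /andP [eR _].
  have [B BB cB] := blow_edge spos fl eR.
  by apply/existsP; exists B; rewrite BB cB eqxx.
apply/negP => /existsP [f /andP [/injectiveP finj /forallP H]].
have [B0 BB0 cB0] := blow_edge spos fl k0R.
by have := H B0; rewrite BB0 /= inE => /andP [_]; rewrite card_imset // cB0 eqxx.
Qed.
End PartG.
Section PartH.
Set Implicit Arguments. Unset Strict Implicit.
Variable R : realType.

Lemma powR_bound (x K : R) (n Pi M : nat) : 0 <= x -> 0 < K -> (0 < n)%N -> (0 < Pi)%N ->
  x ^+ Pi * n%:R ^+ M < K -> x <= powR K (Pi%:R^-1) * powR n%:R (- (M%:R / Pi%:R)).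
Proof.
move=> x0 K0 n0 P0 H.
rewrite leNgt; apply/negP => hlt.
set y := powR K _ * _ in hlt.
have y0 : 0 <= y by rewrite mulr_ge0 // powR_ge0.
have Pi0 : (Pi%:R : R) != 0 by rewrite pnatr_eq0 -lt0n.
have hy : y ^+ Pi = K / n%:R ^+ M.
  rewrite /y exprMn -!powR_mulrn ?powR_ge0 // -!powRrM mulVf // powRr1 ?(ltW K0) //.
  rewrite mulNr mulfVK // powRN powR_mulrn // ler0n //.
have : y ^+ Pi < x ^+ Pi by rewrite ltrXn2r // -lt0n.
rewrite hy ltr_pdivrMr ?exprn_gt0 ?ltr0n // => h.
by move: H; rewrite ltNge (ltW h).
Qed.

Lemma ffact_lower (n j : nat) : (2 * j <= n)%N -> (n ^ j <= 2 ^ j * n ^_ j)%N.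
Proof.
elim: j => [|j IH] h; first by rewrite expn0 ffactn0.
have h' : (2 * j <= n)%N by lia.
rewrite ffactnSr !expnS.
have h2 : (n <= 2 * (n - j))%N by lia.
have := IH h'; set A := (n ^ j)%N; set B := (2 ^ j * n ^_ j)%N => hA.
have -> : (2 * 2 ^ j * (n ^_ j * (n - j)) = B * (2 * (n - j)))%N by rewrite /B; ring.
rewrite mulnC; apply: leq_mul => //.
Qed.
End PartH.
Theorem mainTheorem15 (R : realType) (Rs : seq nat) (m : nat)
    (L : {set {set 'I_m}}) (s : 'I_m -> nat) :
  Rs != [::] -> uniq Rs -> all (fun k => (0 < k)%N) Rs ->
  is_flag Rs L ->
  (forall i, (0 < s i)%N) ->
  let delta : R := ((\max_(i < m) s i)%N)%:R / ((\prod_(i < m) s i)%N)%:R in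
  exists C : R, exists N : nat, forall n : nat, (N <= n)%N ->
    `| pin R (blowup s L) n - ((size Rs)%:R - 1) | <= C * powR (n%:R) (- delta).
Proof.
move=> Rn0 uR Rpos fl spos.
case: m L s fl spos => [|m'] L s fl spos.
  exfalso.
  have [k kR] : exists k, k \in Rs by case: (Rs) Rn0 => // a l _; exists a; rewrite mem_head.
  have : (0 < #|[set F in L | #|F| == k]|)%N by rewrite (flag_one fl kR).
  case/card_gt0P => F; rewrite inE => /andP [_ /eqP Fk].
  have := allP Rpos k kR; rewrite -Fk /=.
  by have := max_card F; rewrite card_ord leqn0 => /eqP ->.
move=> delta.
have [K [K1 HK]] := KST_ffun R m' s spos.
set Pi := (\prod_(i < m'.+1) s i)%N.
set M := (\max_(i < m'.+1) s i)%N.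
have Pi0 : (0 < Pi)%N by rewrite /Pi prodn_gt0.
have K0 : 0 < K by apply: lt_le_trans K1.
set C : R := 2 ^+ m'.+1 * powR K (Pi%:R^-1).
have C0 : 0 <= C by rewrite mulr_ge0 ?exprn_ge0 ?powR_ge0.
exists C, (2 * m'.+1)%N => n hN.
have mn : (m'.+1 <= n)%N by lia.
have n0 : (0 < n)%N by lia.
have r1 : (1 <= size Rs)%N by rewrite lt0n size_eq0.
have r10 : (0 : R) <= (size Rs)%:R - 1 by rewrite subr_ge0 ler1n.
have lb := lower_bound R Rn0 uR fl spos mn.
have ub : pin R (blowup s L) n <= (size Rs)%:R - 1 + C * powR n%:R (- delta).
  rewrite /pin; apply: bigmax_le.
    by rewrite addr_ge0 // mulr_ge0 // powR_ge0.
  move=> E /andP [ss nh].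
  have gb := good_bound R fl uR Rn0 ss mn.
  have cT : #|injset m'.+1 n| = (n ^_ m'.+1)%N.
    by have := card_inj_ffuns 'I_m'.+1 'I_n; rewrite !card_ord.
  have T0 : (0 : R) < #|injset m'.+1 n|%:R by rewrite cT ltr0n ffact_gt0.
  set G := #|goodset L E|.
  have hb : hn R E <= (size Rs)%:R - 1 + G%:R / #|injset m'.+1 n|%:R.
    by rewrite -ler_pdivlMr // in gb; apply: le_trans gb _; rewrite mulrDl mulfK ?gt_eqF.
  pose GP : pred {ffun 'I_m'.+1 -> 'I_n} := fun phi => phi \in goodset L E.
  have cG : #|GP| = G by apply: eq_card.
  have nm0 : (0 : R) < (n ^ m'.+1)%:R by rewrite ltr0n expn_gt0 n0.
  set x : R := G%:R / (n ^ m'.+1)%:R.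
  have x0 : 0 <= x by rewrite /x divr_ge0 ?ler0n.
  have hx : x ^+ Pi * n%:R ^+ M < K.
    rewrite ltNge; apply/negP => hK.
    have hK' : K <= (#|GP|%:R / (n ^ m'.+1)%:R) ^+ Pi * n%:R ^+ M by rewrite cG.
    have [V [HV1 HV2]] := HK n GP n0 hK'.
    by move: nh; rewrite (box_hcontains spos HV1 HV2).
  have hx2 := powR_bound x0 K0 n0 Pi0 hx.
  have hGT : G%:R / #|injset m'.+1 n|%:R <= 2 ^+ m'.+1 * x.
    have hf : ((n ^ m'.+1)%:R : R) <= 2 ^+ m'.+1 * #|injset m'.+1 n|%:R.
      by rewrite cT -natrX -natrM ler_nat; exact: ffact_lower.
    rewrite /x ler_pdivrMr //.
    rewrite (_ : 2 ^+ m'.+1 * (G%:R / (n ^ m'.+1)%:R) * #|injset m'.+1 n|%:R =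
                 G%:R * ((2 ^+ m'.+1 * #|injset m'.+1 n|%:R) / (n ^ m'.+1)%:R)); last by ring.
    rewrite -[X in X <= _]mulr1 ler_wpM2l ?ler0n // ler_pdivlMr // mul1r //.
  apply: le_trans hb _; rewrite lerD2l.
  apply: le_trans hGT _; rewrite /C -mulrA ler_wpM2l ?exprn_ge0 //.
rewrite ger0_norm ?subr_ge0 //.
lra.
Qed.
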